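(* Let $p\ge2$ and $\delta>0$, and let $n$ be sufficiently large. Let $G$ be a graph on $n$ vertices and let $V(G)=V_1\cup\dots\cup V_p$ be a partition with $|E(V_1)|+\dots+|E(V_p)|<\delta^2n^2$. Then at most $2^{t(n,p)-1}$ orientations of $G$ are not relevant (with respect to this partition and $\delta$).
   Context: $E(V_i)$ is the set of edges of $G$ with both ends in $V_i$; $t(n,p)$ is the number of edges of the complete balanced $p$-partite graph on $n$ vertices. Given a partition $V(G)=V_1\cup\dots\cup V_p$ and $\delta>0$, an orientation $\vec G$ of $G$ is relevant if for every $i\neq j$ and all $X_1\subseteq V_i$, $X_2\subseteq V_j$ with $|X_1|,|X_2|>2\delta n$, there are at least $|X_1||X_2|/10$ edges of $\vec G$ directed from $X_1$ to $X_2$. *)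

(* Defs.v *)
From HB Require Import structures.
From mathcomp Require Import all_boot all_order all_algebra.
From mathcomp Require Import reals.
Set Implicit Arguments. Unset Strict Implicit. Unset Printing Implicit Defensive.
Import Order.TTheory GRing.Theory Num.Theory.

(* A graph on n vertices: vertex set 'I_n, adjacency [adj] (assumed
   symmetric and irreflexive in the theorem).  A partition into p parts
   is a map [part : 'I_n -> 'I_p], V_i = part^-1(i). *)

Definition edges_in n p (adj : rel 'I_n) (part : 'I_n -> 'I_p) (i : 'I_p) : nat :=
  #|[set xy : 'I_n * 'I_n | [&& (xy.1 < xy.2)%N, adj xy.1 xy.2,
                              part xy.1 == i & part xy.2 == i]]|.

(* t(n,p): edges of the complete balanced p-partite graph on n vertices:
   n mod p parts of size n %/ p + 1 and the rest of size n %/ p. *)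
Definition turan (n p : nat) : nat :=
  'C(n, 2) - ((n %% p) * 'C((n %/ p).+1, 2) + (p - n %% p) * 'C(n %/ p, 2)).

(* An orientation of adj: o (x,y) = true means the edge xy is directed x -> y. *)
Definition is_orientation n (adj : rel 'I_n) (o : {ffun 'I_n * 'I_n -> bool}) : bool :=
  [forall x : 'I_n, forall y : 'I_n,
     (o (x, y) ==> adj x y) && (adj x y ==> (o (x, y) != o (y, x)))].

Definition dir_edges n (o : {ffun 'I_n * 'I_n -> bool}) (X1 X2 : {set 'I_n}) : nat :=
  #|[set xy : 'I_n * 'I_n | [&& xy.1 \in X1, xy.2 \in X2 & o xy]]|.

Local Open Scope ring_scope.

Definition relevant (R : realType) n p (delta : R) (part : 'I_n -> 'I_p)
    (o : {ffun 'I_n * 'I_n -> bool}) : bool :=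
  [forall i : 'I_p, forall j : 'I_p, forall X1 : {set 'I_n}, forall X2 : {set 'I_n},
    [&& i != j, X1 \subset [set x | part x == i], X2 \subset [set x | part x == j],
        2 * delta * n%:R < #|X1|%:R & 2 * delta * n%:R < #|X2|%:R] ==>
    ((#|X1| * #|X2|)%:R / 10%:R <= (dir_edges o X1 X2)%:R :> R)].

(* Main.v *)
Require Import Defs.
From HB Require Import structures.
From mathcomp Require Import all_boot all_order all_algebra.
From mathcomp Require Import reals.
From mathcomp Require Import ring lra zify.
Import Order.TTheory GRing.Theory Num.Theory.
Set Implicit Arguments. Unset Strict Implicit. Unset Printing Implicit Defensive.


Lemma orientP n (adj : rel 'I_n) o x y : is_orientation adj o -> o (x,y) = adj x y && ~~ o (y,x).
Proof.
move=> /forallP /(_ x) /forallP /(_ y) /andP[h1 h2].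
case A: (adj x y) h1 h2 => /=.
  by move=> _ /eqP; case: (o (x,y)); case: (o (y,x)).
by case: (o (x,y)).
Qed.

Lemma card_bigcup_le (T I : finType) (P : pred I) (F : I -> {set T}) :
  #|\bigcup_(i | P i) F i| <= \sum_(i | P i) #|F i|.
Proof.
apply: (big_rec2 (fun (S : {set T}) (m : nat) => #|S| <= m)); first by rewrite cards0.
move=> i S m _ H; apply: leq_trans (leq_card_setU _ _).1 _; by rewrite leq_add2l.
Qed.

Lemma subsets_bound (T : finType) (U : {set T}) :
  #|[set A : {set T} | (A \subset U) && (10 * #|A| < #|U|)]| * 4 ^ (#|U| - #|U| %/ 10)
   <= 5 ^ #|U|.
Proof.
set N := #|U|.
have sub : [set A : {set T} | (A \subset U) && (10 * #|A| < N)] \subset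
   \bigcup_(k < N.+1 | 10 * k < N) [set A : {set T} | A \subset U & #|A| == k].
  apply/subsetP => A; rewrite inE => /andP[AU HA].
  have lt : #|A| < N.+1 by rewrite ltnS subset_leq_card.
  by apply/bigcupP; exists (Ordinal lt) => //; rewrite inE AU /=.
have H1 := leq_trans (subset_leq_card sub) (card_bigcup_le _ _).
apply: leq_trans (leq_mul H1 (leqnn _)) _.
rewrite big_distrl /=.
have -> : 5 ^ N = (4 + 1) ^ N by [].
rewrite expnDn.
apply: leq_trans (_ : \sum_(k < N.+1 | 10 * k < N) 'C(N, k) * (4 ^ (N - k) * 1 ^ k) <= _); last first.
  by rewrite [X in _ <= X](bigID (fun k : 'I_N.+1 => 10 * k < N)) /= leq_addr.
apply: leq_sum => k Hk; rewrite cards_draws exp1n muln1 leq_mul2l; apply/orP; right.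
rewrite leq_exp2l //; lia.
Qed.


Definition Vp n p (part : 'I_n -> 'I_p) (i : 'I_p) := [set x | part x == i].
Definition Cr n p (part : 'I_n -> 'I_p) :=
  [set xy : 'I_n * 'I_n | (xy.1 < xy.2)%N && (part xy.1 != part xy.2)].

Lemma amgm (a b : nat) : 2 * b * a <= a * a + b * b.
Proof. have : 0 <= (a - b) * (a - b) by []. nia. Qed.

Lemma sum_part n p (part : 'I_n -> 'I_p) (F : 'I_p -> nat) :
  \sum_(x : 'I_n) F (part x) = \sum_(i < p) #|Vp part i| * F i.
Proof.
rewrite (partition_big part predT) //=; apply: eq_bigr => i _.
rewrite (eq_bigr (fun _ => F i)); last by move=> x /eqP ->.
rewrite sum_nat_const; congr (_ * _); apply: eq_card => x; by rewrite !inE.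
Qed.

Lemma sum_sizes n p (part : 'I_n -> 'I_p) : \sum_(i < p) #|Vp part i| = n.
Proof.
have H := sum_part part (fun _ => 1); rewrite sum1_card card_ord in H.
by rewrite [RHS]H; apply: eq_bigr => i _; rewrite muln1.
Qed.

Lemma sq_sizes n p (part : 'I_n -> 'I_p) :
  2 * #|Cr part| + \sum_(i < p) #|Vp part i| * #|Vp part i| <= n * n.
Proof.
set O := [set xy : 'I_n * 'I_n | part xy.1 != part xy.2].
have HO : #|O| = \sum_(x : 'I_n) #|~: Vp part (part x)|.
  rewrite -sum1_card big_mkcond /=.
  transitivity (\sum_(z | predT z.1 && predT z.2)
     (fun x y => if (x, y) \in O then 1 else 0) z.1 z.2).
    by apply: eq_big => [[a b]|[a b] _].
  rewrite -(pair_big predT predT (fun x y => if (x, y) \in O then 1 else 0)) /=.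
  apply: eq_bigr => x _; rewrite -big_mkcond sum1_card /=; apply: eq_card => y.
  rewrite unfold_in /=. change (((x,y) \in O) = (y \in ~: Vp part (part x))). by rewrite !inE eq_sym.
have HO2 : #|O| + \sum_(i < p) #|Vp part i| * #|Vp part i| = n * n.
  rewrite -sum_part HO -big_split /=.
  rewrite (eq_bigr (fun _ => n)); last by move=> x _; rewrite addnC cardsC card_ord.
  by rewrite sum_nat_const card_ord.
set sw := fun xy : 'I_n * 'I_n => (xy.2, xy.1).
have swinj : injective sw by case=> a b [c d] [-> ->].
have Hsub : Cr part :|: sw @: Cr part \subset O.
  apply/subsetP => z; rewrite !inE => /orP[/andP[_ H] //|/imsetP[[a b] ]].
  by rewrite !inE /= => /andP[_ H] ->; rewrite /sw /= eq_sym.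
have Hdis : Cr part :&: sw @: Cr part = set0.
  apply/setP => z; rewrite !inE; apply/negbTE; apply/negP => /andP[/andP[H1 _] /imsetP[[a b]]].
  rewrite !inE /= => /andP[H2 _] E; move: H1; rewrite E /sw /=; lia.
have := subset_leq_card Hsub; rewrite cardsU Hdis cards0 subn0 card_imset // -HO2.
lia.
Qed.

Lemma turan_bound n p (part : 'I_n -> 'I_p) : (0 < p)%N -> #|Cr part| <= turan n p + p.
Proof.
move=> p0.
have h1 := sq_sizes part.
have h0 := sum_sizes part.
set q := n %/ p.
have h2 : 2 * q * n <= \sum_(i < p) #|Vp part i| * #|Vp part i| + p * (q * q).
  have -> : p * (q * q) = \sum_(i < p) q * q by rewrite sum_nat_const card_ord.
  have -> : 2 * q * n = \sum_(i < p) 2 * q * #|Vp part i| by rewrite -big_distrr /= h0.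
  rewrite -big_split /=; apply: leq_sum => i _; exact: amgm.
set r := n %% p.
have h3 : n = q * p + r by rewrite /q /r -divn_eq.
have h4 : r < p by rewrite /r ltn_mod.
have hb : forall m, 2 * 'C(m, 2) = m * m.-1.
  elim=> [|m IH] //; rewrite binS bin1 mulnDr IH; case: m {IH} => //= m; nia.
rewrite /turan -/q -/r.
set X := r * 'C(q.+1, 2) + (p - r) * 'C(q, 2).
have h5 : 2 * X = r * (q.+1 * q) + (p - r) * (q * q.-1).
  by rewrite /X mulnDr !mulnA ![2 * _]mulnC -!mulnA !hb.
have h6 := hb n.
move: h1 h2 h3 h4 h5 h6; set S := \sum_(i < p) _; set c := #|Cr part|.
move=> h1 h2 h3 h4 h5 h6.
have [s hs] : exists s, p = r + s by exists (p - r); lia.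
rewrite hs addKn in h5. rewrite hs in h2 h3 h4 *.
clearbody X S c r q.
have e1 : q * n = r * (q * q) + s * (q * q) + r * q by rewrite h3; ring.
have e2 : q * q.-1 + q = q * q by case: q {h2 h3 h5 e1} => //= q; ring.
have e3 : 2 * X + s * q = r * (q * q) + r * q + s * (q * q).
  rewrite h5 -addnA -mulnDr e2; ring.
have e4 : n * n.-1 + n = n * n by case: (n) => //= m; ring.
have e5 : n = r * q + s * q + r by rewrite h3; ring.
have e6 : (r + s) * (q * q) = r * (q * q) + s * (q * q) by ring.
have e7 : 2 * q * n = 2 * (q * n) by ring.
rewrite e6 e7 in h2.
move: h1 h2 h6 e1 e3 e4 e5.
generalize (n * n) (n * n.-1) (q * n) (r * (q * q)) (s * (q * q)) (r * q) (s * q).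
move=> *; lia.
Qed.


Definition SA (T : finType) (U : {set T}) :=
  [set A : {set T} | (A \subset U) && (10 * #|A| < #|U|)].

Definition crossb n (X1 X2 : {set 'I_n}) (x y : 'I_n) :=
  ((x \in X1) && (y \in X2)) || ((x \in X2) && (y \in X1)).

Definition D2 n (adj : rel 'I_n) (X1 X2 : {set 'I_n}) :=
  [set xy : 'I_n * 'I_n | [&& (xy.1 < xy.2)%N, adj xy.1 xy.2 & ~~ crossb X1 X2 xy.1 xy.2]].

Definition Bset n (adj : rel 'I_n) (X1 X2 : {set 'I_n}) :=
  [set o : {ffun 'I_n * 'I_n -> bool} |
     is_orientation adj o && (10 * dir_edges o X1 X2 < #|X1| * #|X2|)].

Lemma orient_diag n (adj : rel 'I_n) o x : is_orientation adj o -> o (x, x) = false.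
Proof. by move=> H; have := orientP x x H; case: (o (x,x)); rewrite ?andbF. Qed.

Lemma B_card n (adj : rel 'I_n) (X1 X2 : {set 'I_n}) :
  #|Bset adj X1 X2| <= #|SA (setX X1 X2)| * 2 ^ #|D2 adj X1 X2|.
Proof.
set A := fun o : {ffun 'I_n * 'I_n -> bool} =>
  [set xy : 'I_n * 'I_n | [&& xy.1 \in X1, xy.2 \in X2 & o xy]].
set C := fun o : {ffun 'I_n * 'I_n -> bool} => D2 adj X1 X2 :&: [set xy | o xy].
set phi := fun o => (A o, C o).
have inj : {in Bset adj X1 X2 &, injective phi}.
  move=> o1 o2; rewrite !inE => /andP[H1 _] /andP[H2 _] [eA eC].
  have sym : forall x y, o1 (x, y) = o2 (x, y) -> o1 (y, x) = o2 (y, x).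
    by move=> x y E; rewrite (orientP y x H1) (orientP y x H2) E.
  have kA : forall x y, x \in X1 -> y \in X2 -> o1 (x, y) = o2 (x, y).
    move=> x y hx hy.
    have := congr1 (fun S : {set 'I_n * 'I_n} => (x, y) \in S) eA; by rewrite /= !inE /= hx hy.
  have key : forall x y : 'I_n, (x < y)%N -> o1 (x, y) = o2 (x, y).
    move=> x y lt; case hc: (crossb X1 X2 x y).
      move: hc; rewrite /crossb => /orP[/andP[hx hy]|/andP[hx hy]].
        exact: kA.
      by apply: sym; apply: kA.
    case ha: (adj x y); last first.
      by rewrite (orientP x y H1) (orientP x y H2) ha.
    have := congr1 (fun S : {set 'I_n * 'I_n} => (x, y) \in S) eC; by rewrite /= !inE /= lt ha hc.
  apply/ffunP => [[x y]]; case: (ltngtP x y) => h.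
  - exact: key.
  - by apply: sym; apply: key.
  - by have -> := val_inj h; rewrite (orient_diag _ H1) (orient_diag _ H2).
have sub : phi @: Bset adj X1 X2 \subset setX (SA (setX X1 X2)) (powerset (D2 adj X1 X2)).
  apply/subsetP => z /imsetP[o]; rewrite inE => /andP[_ ho] ->.
  rewrite !inE /=; apply/andP; split; last by apply/subsetP => xy; rewrite inE => /andP[].
  apply/andP; split.
    by apply/subsetP => xy; rewrite !inE => /and3P[-> -> _].
  by rewrite cardsX.
rewrite -(card_in_imset inj) -card_powerset -cardsX.
exact: subset_leq_card.
Qed.


Definition InS n p (adj : rel 'I_n) (part : 'I_n -> 'I_p) :=
  [set xy : 'I_n * 'I_n | [&& (xy.1 < xy.2)%N, adj xy.1 xy.2 & part xy.1 == part xy.2]].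

Lemma In_card n p (adj : rel 'I_n) (part : 'I_n -> 'I_p) :
  #|InS adj part| <= \sum_(i < p) edges_in adj part i.
Proof.
have sub : InS adj part \subset \bigcup_(i < p) [set xy : 'I_n * 'I_n | [&& (xy.1 < xy.2)%N, adj xy.1 xy.2,
                              part xy.1 == i & part xy.2 == i]].
  apply/subsetP => xy; rewrite inE => /and3P[h1 h2 /eqP h3].
  by apply/bigcupP; exists (part xy.1) => //; rewrite inE h1 h2 h3 eqxx.
exact: leq_trans (subset_leq_card sub) (card_bigcup_le _ _).
Qed.

Lemma D2_card n p (adj : rel 'I_n) (part : 'I_n -> 'I_p) (i j : 'I_p) (X1 X2 : {set 'I_n}) :
  i != j -> X1 \subset Vp part i -> X2 \subset Vp part j ->
  #|D2 adj X1 X2| + #|X1| * #|X2| <= #|InS adj part| + #|Cr part|.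
Proof.
move=> ij s1 s2.
have p1 : forall x, x \in X1 -> part x = i by move=> x /(subsetP s1); rewrite inE => /eqP.
have p2 : forall x, x \in X2 -> part x = j by move=> x /(subsetP s2); rewrite inE => /eqP.
have dis : forall x, x \in X1 -> x \in X2 -> False.
  by move=> x h1 h2; move: ij; rewrite -(p1 x h1) -(p2 x h2) eqxx.
set f := fun xy : 'I_n * 'I_n => if (xy.1 < xy.2)%N then xy else (xy.2, xy.1).
have finj : {in setX X1 X2 &, injective f}.
  move=> [a b] [c d]; rewrite !inE /= => /andP[ha hb] /andP[hc hd].
  rewrite /f /=; case: ifP => h1; case: ifP => h2 //.
  - by case=> E1 E2; exfalso; apply: (dis a) => //; rewrite E1.
  - by case=> E1 E2; exfalso; apply: (dis b) => //; rewrite E1.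
  - by case=> -> ->.
set W := f @: setX X1 X2.
have WC : W \subset Cr part.
  apply/subsetP => z /imsetP[[a b]]; rewrite !inE /= => /andP[ha hb] ->.
  have ab : a != b by apply/eqP => E; apply: (dis a) => //; rewrite E.
  have pab : part a != part b by rewrite (p1 a ha) (p2 b hb).
  rewrite /f /=; case: ifP => h /=.
    by rewrite h pab.
  rewrite eq_sym pab andbT.
  have : (nat_of_ord a != nat_of_ord b) by [].
  lia.
have DS : D2 adj X1 X2 \subset InS adj part :|: (Cr part :\: W).
  apply/subsetP => [[x y]]; rewrite !inE /= => /and3P[lt ha hc].
  case: (eqVneq (part x) (part y)) => [pe|pne] /=; first by rewrite lt ha.
  rewrite !andbF /= lt !andbT.
  apply/negP; case/imsetP => -[a b]; rewrite !inE /= => /andP[ha' hb'].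
  move=> E; move: E hc; rewrite /f /=; case: ifP => _ [-> ->]; by rewrite /crossb ha' hb' ?orbT.
have cW : #|W| = #|X1| * #|X2| by rewrite card_in_imset // cardsX.
have c1 := subset_leq_card DS.
have c2 := leq_card_setU (InS adj part) (Cr part :\: W).
have c3 := cardsID W (Cr part).
rewrite (setIidPr WC) cW in c3.
move: c1 c2.1 c3; lia.
Qed.


Lemma expn_mono a b e : a <= b -> a ^ e <= b ^ e.
Proof. move=> h; elim: e => // e IH; by rewrite !expnS leq_mul. Qed.

Lemma final_arith (s D N e T p n C : nat) :
  s * 4 ^ (N - N %/ 10) <= 5 ^ N -> D + N <= e + C -> C <= T + p -> 4 * e < N ->
  180 * p + 60 + 120 * n <= 13 * N ->
  s * 2 ^ D * (2 * (p * p * (2 ^ n * 2 ^ n))) <= 2 ^ T.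
Proof.
move=> hs hD hC he hN.
set K := N %/ 10.
have hK : 10 * K <= N by rewrite /K; lia.
set Y := 5 ^ N * 2 ^ (e + p + 1) * (p * p * (2 ^ n * 2 ^ n)).
have hY : Y <= 2 ^ (3 * N - 2 * K).
  rewrite -(leq_exp2r _ _ (isT : 0 < 3)).
  have f1 : (5 ^ N) ^ 3 <= 2 ^ (7 * N).
    by rewrite -expnM mulnC !expnM; apply: expn_mono.
  have f2 : (p * p) ^ 3 <= 2 ^ (6 * p).
    have hp : p <= 2 ^ p by apply: ltnW; apply: ltn_expl.
    rewrite (_ : 6 * p = (p + p) * 3); last by ring.
    by rewrite expnM expnD expn_mono // leq_mul.
  have f3 : (2 ^ (e + p + 1)) ^ 3 = 2 ^ (3 * (e + p + 1)) by rewrite -expnM mulnC.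
  have f4 : (2 ^ n * 2 ^ n) ^ 3 = 2 ^ (6 * n) by rewrite -expnD -expnM; congr (_ ^ _); ring.
  have f5 : (2 ^ (3 * N - 2 * K)) ^ 3 = 2 ^ (3 * (3 * N - 2 * K)) by rewrite -expnM mulnC.
  rewrite f5 /Y expnMn (expnMn (5 ^ N)) (expnMn (p * p)) f3 f4.
  apply: leq_trans (_ : 2 ^ (7 * N) * 2 ^ (3 * (e + p + 1)) * (2 ^ (6 * p) * 2 ^ (6 * n)) <= _).
    by rewrite leq_mul // ?leq_mul.
  rewrite -!expnD leq_exp2l //; lia.
set M := 2 ^ (3 * N - 2 * K).
have hM : 4 ^ (N - K) * 2 ^ N = M.
  by rewrite /M (_ : 4 = 2 ^ 2) // -expnM -expnD; congr (_ ^ _); lia.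
rewrite -(leq_pmul2r (_ : 0 < M)); last by rewrite expn_gt0.
apply: leq_trans (_ : _ <= 2 ^ T * Y) _; last by rewrite leq_mul2l hY orbT.
rewrite -hM.
have h2 : 2 ^ (D + N) <= 2 ^ (e + T + p) by rewrite leq_exp2l //; lia.
rewrite (_ : s * 2 ^ D * (2 * (p * p * (2 ^ n * 2 ^ n))) * (4 ^ (N - K) * 2 ^ N) =
     (s * 4 ^ (N - K)) * 2 ^ (D + N) * (2 * (p * p * (2 ^ n * 2 ^ n)))); last by rewrite expnD; ring.
apply: leq_trans (leq_mul (leq_mul hs h2) (leqnn _)) _.
apply: eq_leq; rewrite /Y !expnD expn1; ring.
Qed.

Local Open Scope ring_scope.

Lemma real_facts (R : realType) (delta : R) (n a b e K N0 : nat) :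
  0 < delta -> 2 * delta * n%:R < a%:R -> 2 * delta * n%:R < b%:R ->
  e%:R < delta ^+ 2 * n%:R ^+ 2 ->
  K%:R / (52 * delta ^+ 2) < N0%:R -> (N0 <= n)%N ->
  (4 * e < a * b)%N /\ (K * n < 13 * (a * b))%N.
Proof.
move=> d0 ha hb he hK hN.
have n0 : 0 <= n%:R :> R by [].
have x0 : 0 <= 2 * delta * n%:R by nra.
have hab : (2 * delta * n%:R) * (2 * delta * n%:R) < a%:R * b%:R.
  have : (2 * delta * n%:R) * (2 * delta * n%:R) <= (2 * delta * n%:R) * b%:R.
    by apply: ler_wpM2l => //; apply: ltW.
  have : (2 * delta * n%:R) * b%:R < a%:R * b%:R.
    have b0 : 0 < b%:R :> R by apply: le_lt_trans hb.
    by rewrite ltr_pM2r.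
  lra.
have dd : 0 < 52 * delta ^+ 2 by rewrite mulr_gt0 // exprn_gt0.
have hK2 : K%:R < 52 * delta ^+ 2 * n%:R.
  have hN' : N0%:R <= n%:R :> R by rewrite ler_nat.
  rewrite ltr_pdivrMr // in hK.
  have := ler_wpM2r (ltW dd) hN'; lra.
split.
  rewrite -(ltr_nat R) !natrM.
  have E : (2 * delta * n%:R) * (2 * delta * n%:R) = 4 * (delta ^+ 2 * n%:R ^+ 2) by ring.
  rewrite E in hab.
  lra.
rewrite -(ltr_nat R) !natrM.
have : K%:R * n%:R <= 52 * delta ^+ 2 * n%:R * n%:R.
  by apply: ler_wpM2r => //; apply: ltW.
have E : (2 * delta * n%:R) * (2 * delta * n%:R) = 4 * (delta ^+ 2 * n%:R * n%:R) by ring.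
rewrite E in hab.
lra.
Qed.

Unset Implicit Arguments. Set Strict Implicit. Set Printing Implicit Defensive.

Theorem mainTheorem9 (R : realType) (p : nat) (delta : R) :
  (2 <= p)%N -> 0 < delta ->
  exists N : nat, forall n : nat, (N <= n)%N ->
    forall (adj : rel 'I_n), irreflexive adj -> symmetric adj ->
    forall part : 'I_n -> 'I_p,
      (\sum_(i < p) edges_in adj part i)%:R < delta ^+ 2 * (n%:R) ^+ 2 ->
      (#|[set o : {ffun 'I_n * 'I_n -> bool} |
           is_orientation adj o && ~~ relevant delta part o]|
        <= 2 ^ (turan n p - 1))%N.
Proof.
move=> p2 d0.
set K := (180 * p + 180)%N.
set x := K%:R / (52 * delta ^+ 2).
have x0 : 0 <= x by rewrite /x divr_ge0 // mulr_ge0 // exprn_ge0 // ltW.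
exists (Num.bound x).+1 => n hn adj _ _ part hE.
have hx : x < ((Num.bound x).+1)%:R.
  apply: lt_le_trans (archi_boundP x0) _; by rewrite ler_nat.
set e := (\sum_(i < p) edges_in adj part i)%N.
set P := (p * p * (2 ^ n * 2 ^ n))%N.
set Wit := [set w : ('I_p * 'I_p) * ({set 'I_n} * {set 'I_n}) |
  [&& w.1.1 != w.1.2, w.2.1 \subset Vp part w.1.1, w.2.2 \subset Vp part w.1.2,
      (4 * e < #|w.2.1| * #|w.2.2|)%N & (180 * p + 60 + 120 * n <= 13 * (#|w.2.1| * #|w.2.2|))%N]].
set Bad := [set o : {ffun 'I_n * 'I_n -> bool} | is_orientation adj o && ~~ relevant delta part o].
have sub : Bad \subset \bigcup_(w in Wit) Bset adj w.2.1 w.2.2.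
  apply/subsetP => o; rewrite inE => /andP[ho].
  move/forallPn => [i] /forallPn [j] /forallPn [X1] /forallPn [X2].
  rewrite negb_imply => /andP[/and5P[ij s1 s2 h1 h2] hr].
  have [f1 f2] := @real_facts R delta n _ _ _ K _ d0 h1 h2 hE hx hn.
  apply/bigcupP; exists ((i, j), (X1, X2)).
    rewrite inE /= ij s1 s2 f1 /=.
    apply: leq_trans (ltnW f2); rewrite /K; nia.
  rewrite inE ho /=.
  rewrite -(ltr_nat R) natrM; rewrite -ltNge in hr.
  rewrite natrM ltr_pdivlMr // in hr; rewrite natrM; lra.
have each : forall w, w \in Wit -> (#|Bset adj w.2.1 w.2.2| * (2 * P) <= 2 ^ turan n p)%N.
  move=> [[i j] [X1 X2]]; rewrite inE /= => /and5P[ij s1 s2 h1 h2].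
  apply: leq_trans (_ : (#|SA (setX X1 X2)| * 2 ^ #|D2 adj X1 X2| * (2 * P) <= _)%N).
    by rewrite leq_mul2r B_card orbT.
  have hs : (#|SA (setX X1 X2)| * 4 ^ (#|X1| * #|X2| - (#|X1| * #|X2|) %/ 10)
              <= 5 ^ (#|X1| * #|X2|))%N by rewrite -cardsX; exact: subsets_bound.
  have hD := D2_card adj ij s1 s2.
  have hI := In_card adj part.
  have hC := turan_bound part (ltnW p2).
  apply: (@final_arith _ _ _ _ _ _ _ _ hs _ hC h1 h2).
  apply: leq_trans hD _; rewrite leq_add2r; exact: hI.
have c1 := leq_trans (subset_leq_card sub) (card_bigcup_le _ _).
have c2 : ((\sum_(w in Wit) #|Bset adj w.2.1 w.2.2|) * (2 * P) <= P * 2 ^ turan n p)%N.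
  rewrite big_distrl /=.
  apply: (@leq_trans (\sum_(w in Wit) 2 ^ turan n p)%N).
    by apply: leq_sum => w hw; exact: each.
  rewrite sum_nat_const leq_mul2r; apply/orP; right.
  apply: leq_trans (max_card _) _.
  have cs : forall T : finType, #|{: {set T}}| = (2 ^ #|T|)%N.
    move=> T; rewrite -[#|T|]cardsT -card_powerset; apply: eq_card => A.
    by rewrite !inE subsetT.
  by rewrite !card_prod !card_ord !cs card_ord.
have P0 : (0 < P)%N by rewrite /P !muln_gt0 !expn_gt0 /=; lia.
have c3 : (2 * \sum_(w in Wit) #|Bset adj w.2.1 w.2.2| <= 2 ^ turan n p)%N.
  rewrite -(leq_pmul2r P0); move: c2; rewrite mulnC (mulnC P) -mulnA (mulnC P) mulnA; by [].
apply: leq_trans c1 _.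
case: (turan n p) c3 => [|t] c3.
  by move: c3; rewrite expn0; lia.
by rewrite subSS subn0 -(leq_pmul2l (isT : (0 < 2)%N)) -expnS.
Qed.
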